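(* For every $*$-term of the form $P\land^\circ Q$ (with $P$ a $*$-term and $Q\in P^d$), the tree $se(P\land^\circ Q)$ has no candidate disjunction decomposition. For every $*$-term of the form $P\lor^\circ Q$ (with $P$ a $*$-term and $Q\in P^c$), the tree $se(P\lor^\circ Q)$ has no candidate conjunction decomposition.
   Context: Let $A$ be a nonempty set of atoms; terms are closed terms over constants $\mathsf T,\mathsf F$, atoms $a\in A$, unary $\neg$, binary $\land^\circ$, $\lor^\circ$. Evaluation trees $\mathcal T_A$: $\mathsf T,\mathsf F\in\mathcal T_A$ and $(X\unlhd a\unrhd Y)\in\mathcal T_A$ for $X,Y\in\mathcal T_A$, $a\in A$. $\mathcal T_{A,\triangle}$: the same with leaves in $\{\mathsf T,\mathsf F,\triangle\}$. Leaf replacement $X[\ell_1\mapsto Y_1,\ldots]$ replaces every leaf labelled $\ell_i$ by $Y_i$. $se$: $se(\mathsf T)=\mathsf T$, $se(\mathsf F)=\mathsf F$, $se(a)=\mathsf T\unlhd a\unrhd\mathsf F$, $se(\neg P)=se(P)[\mathsf T\mapsto\mathsf F,\mathsf F\mapsto\mathsf T]$, $se(P\land^\circ Q)=se(P)[\mathsf T\mapsto se(Q)]$, $se(P\lor^\circ Q)=se(P)[\mathsf F\mapsto se(Q)]$. Syntactic categories ($a\in A$): $\mathsf T$-terms $P^{\mathsf T}::=\mathsf T\mid(a\land^\circ P^{\mathsf T})\lor^\circ P^{\mathsf T}$; $\mathsf F$-terms $P^{\mathsf F}::=\mathsf F\mid(a\lor^\circ P^{\mathsf F})\land^\circ P^{\mathsf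 F}$; $\ell$-terms $P^\ell::=(a\land^\circ P^{\mathsf T})\lor^\circ P^{\mathsf F}\mid(\neg a\land^\circ P^{\mathsf T})\lor^\circ P^{\mathsf F}$; $*$-terms $P^*::=P^c\mid P^d$, $P^c::=P^\ell\mid P^*\land^\circ P^d$, $P^d::=P^\ell\mid P^*\lor^\circ P^c$. A pair $(Y,Z)\in\mathcal T_{A,\triangle}\times\mathcal T_A$ is a candidate conjunction decomposition (ccd) of $X\in\mathcal T_A$ if $X=Y[\triangle\mapsto Z]$, $Y$ contains $\triangle$, $Y$ contains $\mathsf F$ but not $\mathsf T$, and $Z$ contains both $\mathsf T$ and $\mathsf F$. It is a candidate disjunction decomposition (cdd) of $X$ if $X=Y[\triangle\mapsto Z]$, $Y$ contains $\triangle$, $Y$ contains $\mathsf T$ but not $\mathsf F$, and $Z$ contains both $\mathsf T$ and $\mathsf F$ (''contains'' refers to leaf labels). *)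

(* Defs.v *)
Set Implicit Arguments.

Inductive term (A : Type) : Type :=
| TT : term A
| FF : term A
| Atom : A -> term A
| Neg : term A -> term A
| AndS : term A -> term A -> term A
| OrS : term A -> term A -> term A.

Arguments TT {A}.
Arguments FF {A}.

(* Evaluation trees with leaves of type L; Node X a Y stands for X ⊴ a ⊵ Y
   (X is the branch taken when a evaluates to true). *)
Inductive etree (A L : Type) : Type :=
| Leaf : L -> etree A L
| Node : etree A L -> A -> etree A L -> etree A L.

Inductive lab2 : Type := lT | lF.
Inductive lab3 : Type := tT | tF | tTri.

Definition tree (A : Type) := etree A lab2.
Definition tree3 (A : Type) := etree A lab3.

Fixpoint lrepl (A L L' : Type) (X : etree A L) (f : L -> etree A L') : etree A L' :=
  match X with
  | Leaf _ l => f l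
  | Node X1 a X2 => Node (lrepl X1 f) a (lrepl X2 f)
  end.

Fixpoint se (A : Type) (P : term A) : tree A :=
  match P with
  | TT => Leaf A lT
  | FF => Leaf A lF
  | Atom a => Node (Leaf A lT) a (Leaf A lF)
  | Neg P1 => lrepl (se P1) (fun l => match l with lT => Leaf A lF | lF => Leaf A lT end)
  | AndS P1 Q1 => lrepl (se P1) (fun l => match l with lT => se Q1 | lF => Leaf A lF end)
  | OrS P1 Q1 => lrepl (se P1) (fun l => match l with lT => Leaf A lT | lF => se Q1 end)
  end.

Fixpoint contains (A L : Type) (X : etree A L) (l : L) : Prop :=
  match X with
  | Leaf _ l' => l' = l
  | Node X1 _ X2 => contains X1 l \/ contains X2 l
  end.

Definition repl_tri (A : Type) (Y : tree3 A) (Z : tree A) : tree A :=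
  lrepl Y (fun l => match l with tT => Leaf A lT | tF => Leaf A lF | tTri => Z end).

Inductive isT (A : Type) : term A -> Prop :=
| isT_T : isT TT
| isT_or : forall (a : A) P Q, isT P -> isT Q -> isT (OrS (AndS (Atom a) P) Q).

Inductive isF (A : Type) : term A -> Prop :=
| isF_F : isF FF
| isF_and : forall (a : A) P Q, isF P -> isF Q -> isF (AndS (OrS (Atom a) P) Q).

Inductive isL (A : Type) : term A -> Prop :=
| isL_pos : forall (a : A) P Q, isT P -> isF Q -> isL (OrS (AndS (Atom a) P) Q)
| isL_neg : forall (a : A) P Q, isT P -> isF Q -> isL (OrS (AndS (Neg (Atom a)) P) Q).

Inductive isStar (A : Type) : term A -> Prop :=
| isStar_c : forall P, isC P -> isStar P
| isStar_d : forall P, isD P -> isStar P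
with isC (A : Type) : term A -> Prop :=
| isC_l : forall P, isL P -> isC P
| isC_and : forall P Q, isStar P -> isD Q -> isC (AndS P Q)
with isD (A : Type) : term A -> Prop :=
| isD_l : forall P, isL P -> isD P
| isD_or : forall P Q, isStar P -> isC Q -> isD (OrS P Q).

Definition ccd (A : Type) (X : tree A) (Y : tree3 A) (Z : tree A) : Prop :=
  X = repl_tri Y Z /\ contains Y tTri /\ contains Y tF /\ ~ contains Y tT
  /\ contains Z lT /\ contains Z lF.

Definition cdd (A : Type) (X : tree A) (Y : tree3 A) (Z : tree A) : Prop :=
  X = repl_tri Y Z /\ contains Y tTri /\ contains Y tT /\ ~ contains Y tF
  /\ contains Z lT /\ contains Z lF.

(* Main.v *)
Require Import Defs.
From Stdlib Require Import Lia.

Set Implicit Arguments.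
Section Aux.
Variable A : Type.

Fixpoint tsize {L : Type} (X : etree A L) : nat :=
  match X with Leaf _ _ => 1 | Node X1 _ X2 => S (tsize X1 + tsize X2) end.

Lemma contains_lrepl_inv (L L' : Type) (S : etree A L) (f : L -> etree A L') l :
  contains (lrepl S f) l -> exists l', contains S l' /\ contains (f l') l.
Proof.
  induction S as [l0|S1 IH1 a S2 IH2]; simpl; intros H.
  - exists l0; auto.
  - destruct H as [H|H]; [destruct (IH1 H) as [l' [? ?]]|destruct (IH2 H) as [l' [? ?]]];
      exists l'; auto.
Qed.

Lemma contains_lrepl (L L' : Type) (S : etree A L) (f : L -> etree A L') l l' :
  contains S l' -> contains (f l') l -> contains (lrepl S f) l.
Proof.
  induction S as [l0|S1 IH1 a S2 IH2]; simpl; intros H1 H2.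
  - subst; auto.
  - destruct H1; auto.
Qed.

Lemma size_lrepl (L L' : Type) (S : etree A L) (f : L -> etree A L') l' :
  contains S l' -> tsize (f l') <= tsize (lrepl S f).
Proof.
  induction S as [l0|S1 IH1 a S2 IH2]; simpl; intros H1.
  - subst; auto.
  - destruct H1 as [H|H]; [specialize (IH1 H)|specialize (IH2 H)]; lia.
Qed.

Arguments contains_lrepl_inv {L L' S f l}.
Arguments contains_lrepl {L L'} S f {l l'}.
Arguments size_lrepl {L L' S} f {l'}.

Definition hand (R : tree A) := fun l => match l with lT => R | lF => Leaf A lF end.
Definition hor (R : tree A) := fun l => match l with lT => Leaf A lT | lF => R end.

Lemma lemA (R Z : tree A) : forall (S : tree A) (Y : tree3 A),
  repl_tri Y Z = lrepl S (hand R) -> ~ contains Y tF -> contains S lF ->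
  contains Z lT -> tsize R <= tsize Z.
Proof.
  induction S as [l0|S1 IH1 a S2 IH2]; intros Y H nF cF cZ;
  (destruct Y as [[| |]|Y1 b Y2];
   [ | | change (repl_tri (Leaf A tTri) Z) with Z in H; rewrite H in cZ |- *;
        destruct (contains_lrepl_inv cZ) as [[|] [c1 c2]];
        [exact (size_lrepl (hand R) c1) | simpl in c2; discriminate] | ]).
  all: simpl in *; try discriminate; try (exfalso; apply nF; reflexivity).
  - subst; discriminate.
  - subst; discriminate.
  - injection H as H1 H2 H3. destruct cF as [cF|cF].
    + apply (IH1 Y1); auto.
    + apply (IH2 Y2); auto.
Qed.

Lemma lemB (R Z : tree A) : forall (Y : tree3 A) (S : tree A),
  repl_tri Y Z = lrepl S (hand R) -> ~ contains Y tF -> contains Y tT ->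
  contains R lF -> tsize Z < tsize R.
Proof.
  induction Y as [l0|Y1 IH1 b Y2 IH2]; intros S H nF cT cR.
  - destruct l0; simpl in cT; try discriminate.
    destruct S as [[|]|S1 a S2]; simpl in H; try discriminate.
    rewrite <- H in cR; simpl in cR; discriminate.
  - destruct S as [[|]|S1 a S2].
    + simpl in H. rewrite <- H in cR.
      destruct (contains_lrepl_inv cR) as [[| |] [c1 c2]].
      * simpl in c2; discriminate.
      * exfalso; apply nF; exact c1.
      * rewrite <- H. simpl in c1 |- *. destruct c1 as [c1|c1];
        pose proof (size_lrepl (fun l => match l with tT => Leaf A lT | tF => Leaf A lF | tTri => Z end) c1) as HH;
        simpl in HH; lia.
    + simpl in H; discriminate.
    + simpl in H. injection H as H1 H2 H3. simpl in nF, cT.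
      destruct cT as [cT|cT].
      * apply (IH1 S1); auto.
      * apply (IH2 S2); auto.
Qed.

Lemma lemA' (R Z : tree A) : forall (S : tree A) (Y : tree3 A),
  repl_tri Y Z = lrepl S (hor R) -> ~ contains Y tT -> contains S lT ->
  contains Z lF -> tsize R <= tsize Z.
Proof.
  induction S as [l0|S1 IH1 a S2 IH2]; intros Y H nF cF cZ;
  (destruct Y as [[| |]|Y1 b Y2];
   [ | | change (repl_tri (Leaf A tTri) Z) with Z in H; rewrite H in cZ |- *;
        destruct (contains_lrepl_inv cZ) as [[|] [c1 c2]];
        [simpl in c2; discriminate | exact (size_lrepl (hor R) c1)] | ]).
  all: simpl in *; try discriminate; try (exfalso; apply nF; reflexivity).
  - subst; discriminate.
  - subst; discriminate.
  - injection H as H1 H2 H3. destruct cF as [cF|cF].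
    + apply (IH1 Y1); auto.
    + apply (IH2 Y2); auto.
Qed.

Lemma lemB' (R Z : tree A) : forall (Y : tree3 A) (S : tree A),
  repl_tri Y Z = lrepl S (hor R) -> ~ contains Y tT -> contains Y tF ->
  contains R lT -> tsize Z < tsize R.
Proof.
  induction Y as [l0|Y1 IH1 b Y2 IH2]; intros S H nF cT cR.
  - destruct l0; simpl in cT; try discriminate.
    destruct S as [[|]|S1 a S2]; simpl in H; try discriminate.
    rewrite <- H in cR; simpl in cR; discriminate.
  - destruct S as [[|]|S1 a S2].
    + simpl in H; discriminate.
    + simpl in H. rewrite <- H in cR.
      destruct (contains_lrepl_inv cR) as [[| |] [c1 c2]].
      * exfalso; apply nF; exact c1.
      * simpl in c2; discriminate.
      * rewrite <- H. simpl in c1 |- *. destruct c1 as [c1|c1];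
        pose proof (size_lrepl (fun l => match l with tT => Leaf A lT | tF => Leaf A lF | tTri => Z end) c1) as HH;
        simpl in HH; lia.
    + simpl in H. injection H as H1 H2 H3. simpl in nF, cT.
      destruct cT as [cT|cT].
      * apply (IH1 S1); auto.
      * apply (IH2 S2); auto.
Qed.

Definition Good (P : term A) := contains (se P) lT /\ contains (se P) lF.

Lemma isT_good (P : term A) : isT P -> contains (se P) lT.
Proof.
  induction 1; simpl; auto.
Qed.

Lemma isF_good (P : term A) : isF P -> contains (se P) lF.
Proof.
  induction 1; simpl; auto.
Qed.

Lemma isL_good (P : term A) : isL P -> Good P.
Proof.
  intros [a P0 Q0 HT HF|a P0 Q0 HT HF]; unfold Good; simpl; split.
  - left. apply (contains_lrepl (se P0) _ (isT_good HT)); reflexivity.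
  - right. apply isF_good; auto.
  - right. apply (contains_lrepl (se P0) _ (isT_good HT)); reflexivity.
  - left. apply isF_good; auto.
Qed.

Lemma star_good : forall P : term A, isStar P -> Good P.
Proof.
  induction P as [| |a|P1 IH|P1 IH1 Q1 IH2|P1 IH1 Q1 IH2]; intros H;
  inversion H as [P' HC|P' HD]; subst;
  try (inversion HC; subst; [apply isL_good; auto| ]);
  try (inversion HD; subst; [apply isL_good; auto| ]);
  try (inversion HC; subst; fail); try (inversion HD; subst; fail).
  all: try (inversion HC; subst); try (inversion HD; subst); try (apply isL_good; auto; fail).
  -
    match goal with H1 : isStar P1, H2 : isD Q1 |- _ =>
      destruct (IH1 H1) as [a1 b1]; destruct (IH2 (isStar_d H2)) as [a2 b2] end.
    unfold Good; simpl; split.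
    + apply (contains_lrepl (se P1) _ a1); exact a2.
    + apply (contains_lrepl (se P1) _ b1); reflexivity.
  - match goal with H1 : isStar P1, H2 : isC Q1 |- _ =>
      destruct (IH1 H1) as [a1 b1]; destruct (IH2 (isStar_c H2)) as [a2 b2] end.
    unfold Good; simpl; split.
    + apply (contains_lrepl (se P1) _ a1); reflexivity.
    + apply (contains_lrepl (se P1) _ b1); exact b2.
Qed.

End Aux.

Arguments lemA {A R Z S Y}.
Arguments lemB {A R Z Y S}.
Arguments lemA' {A R Z S Y}.
Arguments lemB' {A R Z Y S}.

Theorem lemma3p5 (A : Type) (HA : inhabited A) :
  (forall P Q : term A, isStar P -> isD Q ->
     ~ exists (Y : tree3 A) (Z : tree A), cdd (se (AndS P Q)) Y Z) /\
  (forall P Q : term A, isStar P -> isC Q ->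
     ~ exists (Y : tree3 A) (Z : tree A), ccd (se (OrS P Q)) Y Z).
Proof.
  split.
  - intros P Q HP HQ [Y [Z [HX [_ [cT [nF [cZT cZF]]]]]]].
    destruct (star_good HP) as [_ pF]. destruct (star_good (isStar_d HQ)) as [_ qF].
    change (se (AndS P Q)) with (lrepl (se P) (hand (se Q))) in HX.
    symmetry in HX.
    pose proof (lemA HX nF pF cZT). pose proof (lemB HX nF cT qF). lia.
  - intros P Q HP HQ [Y [Z [HX [_ [cT [nF [cZT cZF]]]]]]].
    destruct (star_good HP) as [pT _]. destruct (star_good (isStar_c HQ)) as [qT _].
    change (se (OrS P Q)) with (lrepl (se P) (hor (se Q))) in HX.
    symmetry in HX.
    pose proof (lemA' HX nF pT cZF). pose proof (lemB' HX nF cT qT). lia.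
Qed.
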